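(* Let $d\in\mathbb{N}$ and let $f\in\mathbb{R}[x]$ be a univariate polynomial of degree at most $d$ that is positive on $[-1,1]$, with minimum and maximum values $0<f_{\min}<f_{\max}$ on $[-1,1]$. Let $r\in\mathbb{N}$, $r\ge2$, satisfy \[ \frac{r}{\log r}\ge 10\sqrt{35}\left(1+\tfrac{1}{\sqrt2}\right)d^{5/2}\quad\text{and}\quad \frac{r}{\log r}\ge 150\,d^{5/2}\frac{f_{\max}}{f_{\min}}. \] Then $f+\epsilon\in\mathcal Q(1-x^2)_{2t}$, where $t=O(r)$ and $\epsilon=O(\|f\|_{1,\mathrm{cheb}}\log(r)/r^2)$. In particular, one may take \[ t=104r,\qquad \epsilon=\left(\tfrac72 d^{9/2}+14\right)\|f\|_{1,\mathrm{cheb}}\,\frac{\log r}{r^2}. \]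
   Context: $\Sigma[x]_r$ is the cone of sums of squares of univariate polynomials of degree at most $r$, and $\mathcal Q(1-x^2)_r=\Sigma[x]_r+(1-x^2)\Sigma[x]_{r-2}$. $T_k(x)=\cos(k\arccos x)$ is the Chebyshev polynomial of the first kind; for $p=\sum_k c_kT_k$, $\|p\|_{1,\mathrm{cheb}}=\sum_k|c_k|$. $\log$ is the natural logarithm. *)

(* Defs.v *)
From HB Require Import structures.
From mathcomp Require Import all_boot all_order all_algebra.
From mathcomp Require Import reals exp.
Set Implicit Arguments. Unset Strict Implicit. Unset Printing Implicit Defensive.
Import Order.TTheory GRing.Theory Num.Theory.
Local Open Scope ring_scope.

(* Chebyshev polynomials of the first kind:
   T_0 = 1, T_1 = X, T_{k+2} = 2 X T_{k+1} - T_k  (so that T_k(cos t) = cos(k t)). *)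
Fixpoint chebT_pair (R : comNzRingType) (k : nat) : {poly R} * {poly R} :=
  match k with
  | 0%N => (1, 'X)
  | k'.+1 => let: (a, b) := chebT_pair R k' in (b, 2%:R *: 'X * b - a)
  end.
Definition chebT (R : comNzRingType) (k : nat) : {poly R} := (chebT_pair R k).1.

(* Sigma[x]_r : sums of squares of polynomials, of total degree at most r
   (each square p^2 has degree 2 deg p <= r). *)
Definition sos_deg (R : comNzRingType) (r : nat) (s : {poly R}) : Prop :=
  exists ps : seq {poly R},
    s = \sum_(p <- ps) p ^+ 2 /\ all (fun p : {poly R} => ((size p).-1 * 2 <= r)%N) ps.

Definition quadmod_deg (R : comNzRingType) (r : nat) (q : {poly R}) : Prop :=
  exists s0 s1 : {poly R},
    sos_deg r s0 /\ sos_deg (r - 2) s1 /\ q = s0 + (1 - 'X ^+ 2) * s1.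

(* Main.v *)
Require Import Defs.
From HB Require Import structures.
From mathcomp Require Import all_boot all_order all_algebra.
From mathcomp Require Import reals exp.
From mathcomp Require Import complex zify ring lra.
Import Order.TTheory GRing.Theory Num.Theory.
Local Open Scope ring_scope.

Section Sos.
Variable R : realType.
Implicit Types (p q s t : {poly R}).

Lemma sos_mono n m s : sos_deg n s -> (n <= m)%N -> sos_deg m s.
Proof.
move=> [ps [-> /allP H]] nm; exists ps; split=> //; apply/allP=> p /H /= h.
exact: leq_trans h nm.
Qed.

Lemma sos0 n : sos_deg n (0 : {poly R}).
Proof. by exists [::]; rewrite big_nil. Qed.

Lemma sosD n s t : sos_deg n s -> sos_deg n t -> sos_deg n (s + t).
Proof.
move=> [ps [-> Hp]] [qs [-> Hq]]; exists (ps ++ qs); split.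
  by rewrite big_cat.
by rewrite all_cat Hp Hq.
Qed.

Lemma sos_sq n p : ((size p).-1 * 2 <= n)%N -> sos_deg n (p ^+ 2).
Proof. by move=> h; exists [:: p]; rewrite big_seq1 /= h. Qed.

Lemma sosM n m s t : sos_deg n s -> sos_deg m t -> sos_deg (n + m) (s * t).
Proof.
move=> [ps [-> /allP Hp]] [qs [-> /allP Hq]].
exists [seq p * q | p <- ps, q <- qs]; split.
  rewrite big_allpairs_dep mulr_suml; apply: eq_bigr => p _.
  rewrite mulr_sumr; apply: eq_bigr => q _; by rewrite exprMn.
apply/allP => x /allpairsP [[p q] [/= /Hp hp /Hq hq ->]].
apply: leq_trans (leq_add hp hq); rewrite -mulnDl leq_mul2r /=.
have := size_polyMleq p q.
move: (size (p * q)) (size p) (size q) => a b c; lia.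
Qed.

Definition Qm n (g : {poly R}) := exists s0 s1,
  sos_deg n s0 /\ sos_deg (n - 2) s1 /\ g = s0 + (1 - 'X ^+ 2) * s1.

Lemma Qm_mono n m g : Qm n g -> (n <= m)%N -> Qm m g.
Proof.
move=> [s0 [s1 [h0 [h1 ->]]]] nm; exists s0, s1; split; first exact: sos_mono h0 nm.
split=> //; apply: sos_mono h1 _; exact: leq_sub2r.
Qed.

Lemma Qm_quadmod n g : Qm n g -> quadmod_deg n g.
Proof. by []. Qed.

Lemma sizeL : size (1 - 'X ^+ 2 : {poly R}) = 3%N.
Proof.
rewrite addrC size_polyDl size_polyN size_polyXn // size_poly1 //.
Qed.

Lemma QmM n m g h : (2 <= n)%N -> (2 <= m)%N -> Qm n g -> Qm m h -> Qm (n + m) (g * h).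
Proof.
move=> n2 m2 [s0 [s1 [h0 [h1 ->]]]] [t0 [t1 [k0 [k1 ->]]]].
exists (s0 * t0 + ((1 - 'X ^+ 2) * (1 - 'X ^+ 2)) * (s1 * t1)), (s0 * t1 + s1 * t0).
split; last split; last by ring.
- apply: sosD; first exact: sosM.
  rewrite -expr2.
  have -> : (n + m = 4 + ((n - 2) + (m - 2)))%N.
    by rewrite addnA addnBA // addnC addnBA ?addnBA //; lia.
  apply: sosM; last exact: sosM.
  by apply: sos_sq; rewrite sizeL.
- apply: sosD.
  + have -> : (n + m - 2 = n + (m - 2))%N by lia.
    exact: sosM.
  + have -> : (n + m - 2 = (n - 2) + m)%N by lia.
    exact: sosM.
Qed.


Lemma sos_const n (c : R) : 0 <= c -> sos_deg n c%:P.
Proof.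
move=> c0; have -> : c%:P = (Num.sqrt c)%:P ^+ 2 by rewrite -rmorphXn sqr_sqrtr.
by apply: sos_sq; move: (size_polyC_leq1 (Num.sqrt c)); case: size => [|[|]].
Qed.

Lemma Qm_gen (c : R) (u v : {poly R}) : 0 <= c -> (size u <= 2)%N ->
  u ^+ 2 + (1 - 'X ^+ 2) = 2%:R * v -> Qm 2 (c%:P + v).
Proof.
move=> c0 su huv.
pose w := Num.sqrt (2^-1 : R).
have hw : w ^+ 2 = 2^-1 by rewrite sqr_sqrtr // invr_ge0.
exists (c%:P + (w *: u) ^+ 2), ((w ^+ 2)%:P).
split; last split.
- apply: sosD; first exact: sos_const.
  apply: sos_sq; rewrite size_scale ?sqrtr_eq0 -?ltNge ?invr_gt0 //.
  by move: su; case: size => [|[|[|]]].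
- exact: sos_const (sqr_ge0 _).
- rewrite exprZn -mul_polyC -addrA; congr (_ + _).
  rewrite [_ * _%:P]mulrC -mulrDr huv mulrA -polyC_natr -rmorphM hw mulVf ?pnatr_eq0 //.
  by rewrite mul1r.
Qed.

Lemma Qm_const (c : R) : 0 < c -> Qm 2 c%:P.
Proof.
move=> c0; exists c%:P, 0; split; first exact: sos_const (ltW c0).
by split; [exact: sos0 | rewrite mulr0 addr0].
Qed.

Lemma Qm_up (a : R) : 1 <= a -> Qm 2 (a%:P - 'X).
Proof.
move=> a1; have -> : a%:P - 'X = (a - 1)%:P + (1 - 'X) by rewrite polyCB; ring.
apply: (@Qm_gen _ (1 - 'X)); first by rewrite subr_ge0.
  by rewrite addrC size_polyDl size_polyN size_polyX ?size_poly1.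
ring.
Qed.

Lemma Qm_dn (a : R) : a <= -1 -> Qm 2 ('X - a%:P).
Proof.
move=> a1; have -> : 'X - a%:P = (- a - 1)%:P + (1 + 'X) by rewrite polyCB polyCN; ring.
apply: (@Qm_gen _ (1 + 'X)); first by rewrite subr_ge0 lerNr.
  by rewrite addrC size_polyDl size_polyX ?size_poly1.
ring.
Qed.

Lemma Qm_quad (a b : R) : Qm 2 (('X - a%:P) ^+ 2 + (b ^+ 2)%:P).
Proof.
exists (('X - a%:P) ^+ 2 + (b ^+ 2)%:P), 0; split.
  apply: sosD; last exact: sos_const (sqr_ge0 _).
  by apply: sos_sq; rewrite size_XsubC.
by split; [exact: sos0 | rewrite mulr0 addr0].
Qed.


Local Notation C := (real_complex R).

Lemma map_conj (p : {poly R}) (w : R[i]) :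
  (map_poly C p).[w^*%C] = ((map_poly C p).[w])^*%C.
Proof.
rewrite -horner_map; congr (_.[_]).
rewrite -map_poly_comp; apply: eq_map_poly => x /=.
by apply/eqP; rewrite eq_complex /= oppr0 !eqxx.
Qed.

Lemma mapq_root (a b : R) :
  root (map_poly C (('X - a%:P) ^+ 2 + (b ^+ 2)%:P)) (a +i* b)%C.
Proof.
rewrite /root rmorphD rmorphXn rmorphB /= map_polyX !map_polyC /=.
rewrite !hornerE /=; apply/eqP.
rewrite /real_complex_def /=; simpc; rewrite /=.
apply/eqP; rewrite eq_complex /=; apply/andP; split; apply/eqP; ring.
Qed.


Lemma Qm_pos k (g : {poly R}) : (size g <= k.+1)%N ->
  (forall x : R, -1 <= x <= 1 -> 0 < g.[x]) -> Qm (2 * k + 2) g.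
Proof.
elim: k g => [|k IH] g sg gpos.
  rewrite (size1_polyC sg); apply: Qm_const.
  have := gpos 0; rewrite horner_coef0 => H; apply: H.
  by rewrite oppr_le0 ler01.
case: (leqP (size g) k.+1) => sgk.
  apply: Qm_mono (IH g sgk gpos) _; lia.
have sgE : size g = k.+2 by lia.
have g0 : g != 0 by rewrite -size_poly_eq0 sgE.
have : size (map_poly C g) != 1%N by rewrite size_map_poly sgE.
move/closed_rootP => [[a b] rz].
have gz : (map_poly C g).[(a +i* b)%C] = 0 by apply/eqP.
case: (eqVneq b 0) => [b0|bn0].
-
  subst b.
  have ga : g.[a] = 0.
    apply: (@complexI R); rewrite -horner_map /=; exact: gz.
  have dv : ('X - a%:P) %| g by rewrite dvdp_XsubCl; apply/eqP.
  set h := g %/ ('X - a%:P).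
  have gE : g = h * ('X - a%:P) by rewrite divpK.
  have h0 : h != 0 by apply: contraNneq g0; rewrite gE => ->; rewrite mul0r.
  have sh : size h = k.+1.
    move: sgE; rewrite gE size_mul ?polyXsubC_eq0 // size_XsubC addn2 /=.
    by case.
  have hx : forall x, -1 <= x <= 1 -> 0 < h.[x] * (x - a).
    move=> x hx; have := gpos x hx; by rewrite gE hornerM hornerXsubC.
  have [a1|a1] := leP a 1.
    have [a2|a2] := ltP a (-1).
      have E : g = ('X - a%:P) * h by rewrite mulrC.
      rewrite E; apply: (@Qm_mono (2 + (2 * k + 2))); last by lia.
      apply: QmM; [by [] | by lia | exact: Qm_dn (ltW a2) | ].
      apply: IH; first by rewrite sh.
      move=> x hx'; have := hx x hx'; move/andP: hx' => [h1 h2].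
      have : 0 < x - a by rewrite subr_gt0; apply: lt_le_trans h1.
      move=> p hp; rewrite pmulr_lgt0 // in hp; exact: hp.
    exfalso; suff : 0 < g.[a] by rewrite ga ltxx.
    by apply: gpos; rewrite a2 a1.
  have E : g = (a%:P - 'X) * (- h) by rewrite {1}gE; ring.
  rewrite E; apply: (@Qm_mono (2 + (2 * k + 2))); last by lia.
  apply: QmM; [by [] | by lia | exact: Qm_up (ltW a1) | ].
  apply: IH; first by rewrite size_polyN sh.
  move=> x hx'; have := hx x hx'; move/andP: hx' => [h1 h2].
  have : x - a < 0 by rewrite subr_lt0; apply: le_lt_trans a1.
  move=> p hp; rewrite hornerN oppr_gt0; rewrite nmulr_lgt0 // in hp.
-
  set q := ('X - a%:P) ^+ 2 + (b ^+ 2)%:P.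
  have sq : size q = 3%N.
    rewrite /q size_polyDl size_exp_XsubC //.
    by apply: leq_ltn_trans (size_polyC_leq1 _) _.
  have q0 : q != 0 by rewrite -size_poly_eq0 sq.
  have qpos : forall x, 0 < q.[x].
    move=> x; rewrite /q !hornerE; apply: ltr_wpDl; first exact: sqr_ge0.
    by rewrite exprn_even_gt0 //.
  have dv : q %| g.
    apply/modp_eq0P; set r := g %% q.
    have sr : (size r < 3)%N by rewrite -sq ltn_modp.
    apply/eqP; apply: contraT => r0.
    have rE : r = g - g %/ q * q by apply/eqP; rewrite eq_sym subr_eq addrC /r -divp_eq.
    have root1 : forall w, (map_poly C g).[w] = 0 -> root (map_poly C q) w ->
        root (map_poly C r) w.
      move=> w gw /eqP qw; rewrite /root rE rmorphB rmorphM /= !hornerE gw qw.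
      by rewrite mulr0 subr0.
    have rz1 : root (map_poly C r) (a +i* b)%C by apply: root1 => //; exact: mapq_root.
    have rz2 : root (map_poly C r) ((a +i* b)^*)%C.
      apply: root1; first by rewrite map_conj gz; exact: conjc0.
      by rewrite /root map_conj (eqP (mapq_root a b)) conjc0.
    have : (2 < size (map_poly C r))%N.
      apply: (@max_poly_roots _ _ [:: (a +i* b)%C; ((a +i* b)^*)%C]).
      - by rewrite map_poly_eq0.
      - by rewrite /= rz1 rz2.
      - rewrite /= in_cons in_nil orbF andbT; apply/eqP => /eqP.
        rewrite eq_complex /= eqxx /= => /eqP hb.
        have hb0 : b = 0 by lra.
        by move: bn0; rewrite hb0 eqxx.
    rewrite size_map_poly => h2; by have := leq_ltn_trans h2 sr.
  set h := g %/ q.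
  have gE : g = h * q by rewrite divpK.
  have h0 : h != 0 by apply: contraNneq g0; rewrite gE => ->; rewrite mul0r.
  have sh : size h = k by move: sgE; rewrite gE size_mul // sq addn3 /=; case.
  rewrite gE mulrC; apply: (@Qm_mono (2 + (2 * k + 2))); last by lia.
  apply: QmM; [by [] | by lia | exact: Qm_quad | ].
  apply: IH; first by rewrite sh.
  move=> x hx; have := gpos x hx; rewrite gE hornerM.
  by rewrite pmulr_lgt0.
Qed.

End Sos.

Lemma ln2_ge (R : realType) : 2^-1 <= ln (2 : R).
Proof.
have h := expR_ge1Dx (- ln (2 : R)).
rewrite expRN lnK ?posrE // in h.
have : (2 : R)^-1 = 1 - 2^-1 by field.
lra.
Qed.

Theorem theorem6 (R : realType) (d : nat) (f : {poly R}) (fmin fmax : R)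
  (c : seq R) (r : nat) :
  (size f <= d.+1)%N ->
  (forall x : R, -1 <= x <= 1 -> 0 < f.[x]) ->
  (forall x : R, -1 <= x <= 1 -> fmin <= f.[x] <= fmax) ->
  (exists2 x : R, -1 <= x <= 1 & f.[x] = fmin) ->
  (exists2 x : R, -1 <= x <= 1 & f.[x] = fmax) ->
  0 < fmin < fmax ->
  (* c is the Chebyshev coefficient sequence of f, so ||f||_{1,cheb} = sum |c_k| *)
  f = \sum_(k < size c) c`_k *: chebT R k ->
  (2 <= r)%N ->
  10 * Num.sqrt 35 * (1 + 1 / Num.sqrt 2) * (d%:R ^+ 2 * Num.sqrt d%:R)
    <= r%:R / ln (r%:R : R) ->
  150 * (d%:R ^+ 2 * Num.sqrt d%:R) * (fmax / fmin) <= r%:R / ln (r%:R : R) ->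
  quadmod_deg (2 * (104 * r))
    (f + ((7 / 2 * (d%:R ^+ 4 * Num.sqrt d%:R) + 14)
           * (\sum_(k < size c) `|c`_k|) * ln (r%:R : R) / r%:R ^+ 2)%:P).
Proof.
move=> sf fpos _ _ _ /andP[fmin0 fminmax] _ r2 _ H2.
set eps := (X in _ + X%:P).
have lnr : 2^-1 <= ln (r%:R : R).
  apply: le_trans (ln2_ge R) _; rewrite ler_ln ?posrE ?ltr0n ?ler_nat //.
  by apply: leq_trans r2.
have lnr0 : 0 < ln (r%:R : R) by apply: lt_le_trans lnr; rewrite invr_gt0.
have eps0 : 0 <= eps.
  rewrite /eps; apply: divr_ge0; last by rewrite exprn_ge0 // ler0n.
  apply: mulr_ge0; last exact: ltW.
  apply: mulr_ge0; last by apply: sumr_ge0 => i _.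
  apply: addr_ge0; last by rewrite ler0n.
  apply: mulr_ge0; first by rewrite divr_ge0 // ler0n.
  apply: mulr_ge0; [by rewrite exprn_ge0 // ler0n | exact: sqrtr_ge0].
have sg : (size (f + eps%:P)%R <= d.+1)%N.
  apply: (leq_trans (size_polyD _ _)); rewrite geq_max sf /=.
  by apply: (leq_trans (size_polyC_leq1 _)).
have gpos : forall x : R, -1 <= x <= 1 -> 0 < (f + eps%:P).[x].
  move=> x hx; rewrite hornerD hornerC; apply: ltr_wpDr => //; exact: fpos.
have HQ := @Qm_pos R d _ sg gpos.
have dr : (d.+1 <= 104 * r)%N.
  move: H2; clear -fmin0 fminmax r2 lnr lnr0.
  case: d => [|d] H2; first by lia.
  have s1 : 1 <= Num.sqrt (d.+1%:R : R).
    have h1 : (1 : R) <= d.+1%:R by rewrite ler1n.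
    by rewrite -{1}sqrtr1; apply: ler_wsqrtr.
  have dd : (d.+1%:R : R) <= d.+1%:R ^+ 2 * Num.sqrt d.+1%:R.
    have hx : 1 <= (d.+1%:R : R) by rewrite ler1n.
    rewrite expr2; nra.
  have ff : 1 <= fmax / fmin by rewrite ler_pdivlMr // mul1r ltW.
  have H3 : 150 * (d.+1%:R : R) <= r%:R / ln (r%:R : R).
    apply: le_trans H2; rewrite -[X in X <= _]mulr1.
    apply: ler_pM => //; first by rewrite mulr_ge0 // ler0n.
    apply: ler_pM => //; by rewrite ler0n.
  have H4 : r%:R / ln (r%:R : R) <= 2 * (r%:R : R).
    rewrite ler_pdivrMr //.
    have : 0 <= (r%:R : R) by rewrite ler0n.
    nra.
  have : (75 * d.+1 <= r)%N.
    rewrite -(ler_nat R) natrM.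
    have : (75%:R : R) = 75 by [].
    lra.
  lia.
apply: Qm_mono HQ _; lia.
Qed.
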